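(* Let $L\ge 2$ and $n_0,\dots,n_L\ge1$ be integers. For $\ell=1,\dots,L$ fix a weight matrix $W_\ell\in\mathbb{R}^{n_\ell\times n_{\ell-1}}$ and a bias $b_\ell\in\mathbb{R}^{n_\ell}$, and let $S_\ell(x)=W_\ell x+b_\ell$. Let $H^{+}_0(s)=0$ for $s<0$ and $H^{+}_0(s)=1$ for $s\ge0$, applied componentwise. Fix an input $x_0\in\mathbb{R}^{n_0}$ and define the quantised features $x_\ell:=H^{+}_0(S_\ell(x_{\ell-1}))$, $\ell=1,\dots,L$. Let $\lambda>0$ be a parameter, and for each $\ell=1,\dots,L$ let $\lambda_\ell=\lambda_\ell(\lambda)>0$ and let $\sigma_{\lambda_\ell}:\mathbb{R}\to\mathbb{R}$ be a function (applied componentwise) such that: (a) $\lambda_\ell\to0$ as $\lambda\to0$; (b) $\sigma_{\lambda_\ell}(s)\to H^{+}_0(s)$ as $\lambda_\ell\to0$, for every $s\in\mathbb{R}$; (c) $\sigma_{\lambda_\ell}$ is strictly increasing; (d) $0\le\sigma_{\lambda_\ell}(s)\le1$ for all $s\in\mathbb{R}$. Define the regularised features $x_{\lambda,0}:=x_0$ and $x_{\lambda,\ell}:=\sigma_{\lambda_\ell}(S_\ell(x_{\lambda,\ell-1}))$, $\ell=1,\dots,L$. Assume moreover that convergence rates $r_\ell$, $\ell=1,\dots,L$, are given such that for every $\varepsilon>0$ and every $\ell=1,\dots,L$: $\sigma_{\lambda_\ell}^{-1}(\varepsilon r_\ell(\lambda))\to0$, $\quad\sigma_{\lambda_\ell}^{-1}(1-\varepsilon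 r_\ell(\lambda))\to0$, $\quad\dfrac{1-\sigma_{\lambda_\ell}(0)}{r_\ell(\lambda)}\to0$ as $\lambda\to0$, and, for $\ell=2,\dots,L$, $\dfrac{r_{\ell-1}(\lambda)}{\sigma_{\lambda_\ell}^{-1}(1-\varepsilon r_\ell(\lambda))}\to0$ as $\lambda\to0$. Then for every $\ell=1,\dots,L$, $\dfrac{\|x_{\lambda,\ell}-x_\ell\|}{r_\ell(\lambda)}\to0$ as $\lambda\to0$.
   Context: A convergence rate is a continuous non-decreasing function $r:[0,\infty)\to[0,\infty)$ with $\lim_{\lambda\to0}r(\lambda)=0$. $\sigma_{\lambda_\ell}^{-1}$ denotes the inverse of the strictly increasing function $\sigma_{\lambda_\ell}$ on its image. $\|\cdot\|$ is the Euclidean norm. *)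

(* Defs.v *)
From HB Require Import structures.
From mathcomp Require Import all_boot all_order all_algebra.
From mathcomp Require Import all_classical all_reals all_analysis.
Set Implicit Arguments. Unset Strict Implicit. Unset Printing Implicit Defensive.
Import Order.TTheory GRing.Theory Num.Theory numFieldNormedType.Exports.
Local Open Scope ring_scope.
Local Open Scope classical_set_scope.

Section Defs.
Variable R : realType.

Definition heaviside (s : R) : R := if 0 <= s then 1 else 0.

Definition enorm (m : nat) (v : 'cV[R]_m) : R :=
  Num.sqrt (\sum_(i < m) v i 0 ^+ 2).

(* Inverse of f on its image: the (unique, if f is injective) x with f x = y;
   an arbitrary default (0) outside the image. *)
Definition inv_on (f : R -> R) (y : R) : R := xget 0 [set x | f x = y].

(* Network features.  n l = n_l; W l : 'M_(n_{l+1}, n_l) is the paper's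
   W_{l+1}, b l is the paper's b_{l+1}; act l is the activation of layer l
   (1-based), applied componentwise.  feat n W b x0 act l = x_l. *)
Fixpoint feat (n : nat -> nat) (W : forall l : nat, 'M[R]_(n l.+1, n l))
  (b : forall l : nat, 'cV[R]_(n l.+1)) (x0 : 'cV[R]_(n 0%N))
  (act : nat -> R -> R) (l : nat) : 'cV[R]_(n l) :=
  match l return 'cV[R]_(n l) with
  | 0%N => x0
  | k.+1 => map_mx (act k.+1) (W k *m feat W b x0 act k + b k)
  end.

Definition conv_rate (r : R -> R) : Prop :=
  {within [set x : R | 0 <= x], continuous r} /\
  {in [set x : R | 0 <= x] &, {homo r : x y / x <= y}} /\
  (forall x, 0 <= x -> 0 <= r x) /\
  r x @[x --> 0^'+] --> 0.

End Defs.

(* Main.v *)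
Require Import Defs.
From HB Require Import structures.
From mathcomp Require Import all_boot all_order all_algebra.
From mathcomp Require Import all_classical all_reals all_analysis.
From mathcomp Require Import lra.
Import Order.TTheory GRing.Theory Num.Theory numFieldNormedType.Exports.
Local Open Scope ring_scope.
Local Open Scope classical_set_scope.

Section Helpers.
Variable R : realType.

Lemma inv_onE (f : R -> R) (y : R) : y \in range f -> f (inv_on f y) = y.
Proof.
rewrite inE => -[x _ fx].
rewrite /inv_on.
have := @xgetPex R 0 [set x | f x = y].
by apply; exists x.
Qed.

Lemma component (sg : R -> R -> R) (rho q t : R -> R) (s : R) :
  (forall la, 0 < la -> {homo sg la : x y / x < y}) ->
  (forall la, 0 < la -> forall x, 0 <= sg la x <= 1) ->
  (\forall la \near 0^'+, 0 < rho la) ->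
  (forall eps : R, 0 < eps -> \forall la \near 0^'+,
     (eps * rho la) \in range (sg la) /\ (1 - eps * rho la) \in range (sg la)) ->
  (forall eps : R, 0 < eps -> inv_on (sg la) (eps * rho la) @[la --> 0^'+] --> 0) ->
  ((1 - sg la 0) / rho la @[la --> 0^'+] --> 0) ->
  (forall eps : R, 0 < eps ->
     q la / inv_on (sg la) (1 - eps * rho la) @[la --> 0^'+] --> 0) ->
  (\forall la \near 0^'+, 0 <= q la) ->
  (forall eta : R, 0 < eta -> \forall la \near 0^'+, `|t la - s| <= eta * q la) ->
  q la @[la --> 0^'+] --> 0 ->
  forall eps : R, 0 < eps ->
    \forall la \near 0^'+, `|sg la (t la) - heaviside s| <= eps * rho la.
Proof.
move=> Hmono Hbd Hrho Hrng Hinv0 Hsig0 Hq Hq0 Hpert Hqc eps eps0.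
have Hsig0' := proj1 (cvgr0Pnorm_lt _) Hsig0 _ eps0.
have Hqc' := proj1 (cvgr0Pnorm_lt _) Hqc.
have Hle : forall la, 0 < la -> {homo sg la : x y / x <= y}.
  by move=> la la0 x y; rewrite le_eqVlt => /orP[/eqP->//|/(Hmono _ la0)/ltW].
case: (ltgtP s 0) => hs.
-
  have Hi := proj1 (cvgr0Pnorm_lt _) (Hinv0 _ eps0).
  have s2 : 0 < - s / 2 by rewrite divr_gt0 // oppr_gt0.
  near=> la.
  have la0 : 0 < la by near: la; exact: nbhs_right_gt.
  have [rg _] : (eps * rho la) \in range (sg la) /\ (1 - eps * rho la) \in range (sg la).
    by near: la; exact: Hrng.
  have hi : `|inv_on (sg la) (eps * rho la)| < - s / 2 by near: la; exact: Hi.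
  have hq : `|q la| < - s / 2 by near: la; exact: Hqc'.
  have hp : `|t la - s| <= 1 * q la by near: la; exact: Hpert.
  have ht : t la < inv_on (sg la) (eps * rho la).
    move: hi hq hp; rewrite mul1r => /ltr_normlP[hi1 hi2] /ltr_normlP[hq1 hq2] /ler_normlP[hp1 hp2].
    lra.
  have := Hmono _ la0 _ _ ht; rewrite inv_onE // /heaviside.
  rewrite (leNgt 0 s) hs /= subr0 => h.
  have [h0 _] := andP (Hbd _ la0 (t la)).
  by rewrite ger0_norm // ltW.
-
  near=> la.
  have la0 : 0 < la by near: la; exact: nbhs_right_gt.
  have hq : `|q la| < s by near: la; exact: Hqc'.
  have hp : `|t la - s| <= 1 * q la by near: la; exact: Hpert.
  have hrho : 0 < rho la by near: la; exact: Hrho.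
  have hs0 : `|(1 - sg la 0) / rho la| < eps by near: la; exact: Hsig0'.
  have ht : 0 < t la.
    move: hq hp; rewrite mul1r => /ltr_normlP[hq1 hq2] /ler_normlP[hp1 hp2].
    lra.
  have := Hmono _ la0 _ _ ht; rewrite /heaviside (ltW hs) => h.
  have [_ h1] := andP (Hbd _ la0 (t la)).
  have h2 : 1 - sg la 0 < eps * rho la.
    by have := le_lt_trans (ler_norm _) hs0; rewrite ltr_pdivrMr // mulrC.
  rewrite ler0_norm ?subr_le0 //; lra.
-
  subst s.
  have Hq' := proj1 (cvgr0Pnorm_lt _) (Hq _ eps0).
  near=> la.
  have la0 : 0 < la by near: la; exact: nbhs_right_gt.
  have [_ rg] : (eps * rho la) \in range (sg la) /\ (1 - eps * rho la) \in range (sg la).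
    by near: la; exact: Hrng.
  have hrho : 0 < rho la by near: la; exact: Hrho.
  have hs0 : `|(1 - sg la 0) / rho la| < eps by near: la; exact: Hsig0'.
  have hq : `|q la / inv_on (sg la) (1 - eps * rho la)| < 1 by near: la; exact: Hq'.
  have hq0 : 0 <= q la by near: la; exact: Hq0.
  have hp : `|t la - 0| <= 1 * q la by near: la; exact: Hpert.
  have h2 : 1 - sg la 0 < eps * rho la.
    by have := le_lt_trans (ler_norm _) hs0; rewrite ltr_pdivrMr // mulrC.
  set m := inv_on (sg la) (1 - eps * rho la) in hq *.
  have hm : sg la m = 1 - eps * rho la by rewrite inv_onE.
  have m0 : m < 0.
    rewrite ltNge; apply/negP => /(Hle _ la0) h.
    move: h; rewrite hm; lra.
  have qm : q la < - m.
    move: hq; rewrite normrM normfV (ger0_norm hq0) (ltr0_norm m0).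
    by rewrite ltr_pdivrMr ?oppr_gt0 // mul1r.
  have ht : m < t la.
    move: hp; rewrite subr0 mul1r => hp.
    move/ler_normlP: hp => [hp1 hp2]. lra.
  have := Hmono _ la0 _ _ ht; rewrite hm /heaviside lexx => h.
  have [_ h1] := andP (Hbd _ la0 (t la)).
  rewrite ler0_norm ?subr_le0 //; lra.
Unshelve. all: by end_near.
Qed.


Lemma enorm_coord m (v : 'cV[R]_m) j : `|v j 0| <= enorm v.
Proof.
rewrite /enorm -sqrtr_sqr ler_sqrt; last by apply: sumr_ge0 => i _; exact: sqr_ge0.
by rewrite (bigD1 j) //= lerDl; apply: sumr_ge0 => i _; exact: sqr_ge0.
Qed.

Lemma enorm_bound m (v : 'cV[R]_m) e :
  (forall i, `|v i 0| <= e) -> enorm v <= m%:R * e.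
Proof.
case: m v => [|m] v H.
  by rewrite /enorm big_ord0 sqrtr0 mul0r.
have e0 : 0 <= e by apply: le_trans (H ord0); exact: normr_ge0.
rewrite /enorm -(ger0_norm (mulr_ge0 (ler0n _ _) e0)) -sqrtr_sqr ler_sqrt; last exact: sqr_ge0.
apply: (@le_trans _ _ (\sum_(i < m.+1) e ^+ 2)).
  apply: ler_sum => i _; rewrite -real_normK ?num_real //.
  by rewrite lerXn2r ?nnegrE ?normr_ge0 ?H.
have -> : \sum_(i < m.+1) e ^+ 2 = m.+1%:R * e ^+ 2 by rewrite sumr_const card_ord mulr_natl.
rewrite exprMn ler_wpM2r ?sqr_ge0 //.
by rewrite -natrX ler_nat expnS expn1 -[X in (X <= _)%N]muln1 leq_mul.
Qed.

Lemma coord_mul p m (A : 'M[R]_(p, m)) (u : 'cV[R]_m) i :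
  `|(A *m u) i 0| <= (\sum_j `|A i j|) * enorm u.
Proof.
rewrite mxE mulr_suml; apply: le_trans (ler_norm_sum _ _ _) _.
by apply: ler_sum => j _; rewrite normrM ler_wpM2l ?normr_ge0 ?enorm_coord.
Qed.


Lemma entry_map m p (f : R -> R) (M : 'M[R]_(m, p)) i j : (map_mx f M) i j = f (M i j).
Proof. by rewrite mxE. Qed.

Lemma entry_sub m p (M N : 'M[R]_(m, p)) i j : (M - N) i j = M i j - N i j.
Proof. by rewrite !mxE. Qed.

Lemma entry_pert p m (A : 'M[R]_(p, m)) (u v : 'cV[R]_m) (c : 'cV[R]_p) i :
  (A *m u + c) i 0 - (A *m v + c) i 0 = (A *m (u - v)) i 0.
Proof.
have -> : A *m (u - v) = (A *m u + c) - (A *m v + c).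
  by rewrite mulmxBr opprD addrACA subrr addr0.
by rewrite entry_sub.
Qed.

End Helpers.

Theorem theorem1 (R : realType) (L : nat) (n : nat -> nat)
  (W : forall l : nat, 'M[R]_(n l.+1, n l)) (b : forall l : nat, 'cV[R]_(n l.+1))
  (x0 : 'cV[R]_(n 0%N))
  (lam : nat -> R -> R) (sigma : R -> R -> R) (r : nat -> R -> R) :
  (2 <= L)%N ->
  (forall l, (l <= L)%N -> (1 <= n l)%N) ->
  (* lambda_l(lambda) > 0 *)
  (forall l, (1 <= l <= L)%N -> forall la : R, 0 < la -> 0 < lam l la) ->
  (* (a) *)
  (forall l, (1 <= l <= L)%N -> lam l la @[la --> 0^'+] --> 0) ->
  (* (b) *)
  (forall s : R, sigma mu s @[mu --> 0^'+] --> heaviside s) ->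
  (* (c) *)
  (forall l, (1 <= l <= L)%N -> forall la : R, 0 < la ->
     {homo sigma (lam l la) : x y / x < y}) ->
  (* (d) *)
  (forall l, (1 <= l <= L)%N -> forall la : R, 0 < la ->
     forall s, 0 <= sigma (lam l la) s <= 1) ->
  (* convergence rates (positive near 0, so that the quotients make sense) *)
  (forall l, (1 <= l <= L)%N -> conv_rate (r l)) ->
  (forall l, (1 <= l <= L)%N -> \forall la \near 0^'+, 0 < r l la) ->
  (* the arguments of sigma^{-1} lie in the image of sigma (near 0) *)
  (forall l, (1 <= l <= L)%N -> forall eps : R, 0 < eps ->
     \forall la \near 0^'+,
       (eps * r l la) \in range (sigma (lam l la)) /\
       (1 - eps * r l la) \in range (sigma (lam l la))) ->
  (forall l, (1 <= l <= L)%N -> forall eps : R, 0 < eps ->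
     inv_on (sigma (lam l la)) (eps * r l la) @[la --> 0^'+] --> 0) ->
  (forall l, (1 <= l <= L)%N -> forall eps : R, 0 < eps ->
     inv_on (sigma (lam l la)) (1 - eps * r l la) @[la --> 0^'+] --> 0) ->
  (forall l, (1 <= l <= L)%N ->
     (1 - sigma (lam l la) 0) / r l la @[la --> 0^'+] --> 0) ->
  (forall l, (2 <= l <= L)%N -> forall eps : R, 0 < eps ->
     r l.-1 la / inv_on (sigma (lam l la)) (1 - eps * r l la)
       @[la --> 0^'+] --> 0) ->
  forall l, (1 <= l <= L)%N ->
    enorm (feat W b x0 (fun k => sigma (lam k la)) l
           - feat W b x0 (fun _ => @heaviside R) l) / r l la
      @[la --> 0^'+] --> 0.
Proof.
move=> HL Hn Hlam Hlam0 Hb Hmono Hbd Hconv Hrpos Hrng Hinv1 Hinv2 Hsig0 Hratio.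
pose Fs la l := feat W b x0 (fun k => sigma (lam k la)) l.
pose Fh l := feat W b x0 (fun _ => @heaviside R) l.
have step : forall k, (k < L)%N -> forall q : R -> R,
   (forall eta : R, 0 < eta -> \forall la \near 0^'+,
       enorm (Fs la k - Fh k) <= eta * q la) ->
   (\forall la \near 0^'+, 0 <= q la) -> q la @[la --> 0^'+] --> 0 ->
   (forall eps : R, 0 < eps ->
      q la / inv_on (sigma (lam k.+1 la)) (1 - eps * r k.+1 la) @[la --> 0^'+] --> 0) ->
   forall eps : R, 0 < eps -> \forall la \near 0^'+,
      enorm (Fs la k.+1 - Fh k.+1) <= eps * r k.+1 la.
  move=> k kL q Hpk Hq0 Hqc Hq eps eps0.
  have kr : (1 <= k.+1 <= L)%N by apply/andP; split.
  have nN : (0 < n k.+1)%N := Hn _ kL.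
  have N0 : 0 < (n k.+1)%:R :> R by rewrite ltr0n.
  have e'0 : 0 < eps / (n k.+1)%:R by rewrite divr_gt0.
  have comp : forall i : 'I_(n k.+1), \forall la \near 0^'+,
      `|(Fs la k.+1 - Fh k.+1) i 0| <= eps / (n k.+1)%:R * r k.+1 la.
    move=> i.
    have M1 : forall la, 0 < la -> {homo sigma (lam k.+1 la) : x y / x < y}.
      move=> la la0; exact: Hmono _ kr la la0.
    have M2 : forall la, 0 < la -> forall x, 0 <= sigma (lam k.+1 la) x <= 1.
      move=> la la0; exact: Hbd _ kr la la0.
    have P : forall eta : R, 0 < eta -> \forall la \near 0^'+,
        `|(W k *m Fs la k + b k) i 0 - (W k *m Fh k + b k) i 0| <= eta * q la.
      move=> eta eta0.
      set C := \sum_j `|W k i j|.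
      have C0 : 0 <= C by apply: sumr_ge0 => j _; exact: normr_ge0.
      have C1 : 0 < C + 1 by lra.
      have := Hpk (eta / (C + 1)) (divr_gt0 eta0 C1).
      move=> Hp.
      near=> la.
      have hp : enorm (Fs la k - Fh k) <= eta / (C + 1) * q la by near: la; exact: Hp.
      have hq : 0 <= q la by near: la; exact: Hq0.
      rewrite entry_pert; apply: le_trans (coord_mul _ _ _ _ _ _) _.
      apply: le_trans (ler_wpM2l C0 hp) _.
      rewrite mulrA ler_wpM2r // mulrCA ger_pMr // ler_pdivrMr // mul1r; lra.
    have H := @component R (fun la => sigma (lam k.+1 la)) (r k.+1) q
      (fun la => (W k *m Fs la k + b k) i 0) ((W k *m Fh k + b k) i 0)
      M1 M2 (Hrpos _ kr) (Hrng _ kr) (Hinv1 _ kr) (Hsig0 _ kr) Hq Hq0 P Hqc _ e'0.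
    apply: filterS H => la.
    by rewrite entry_sub /Fs /Fh /= !entry_map.
  have Hall' : \forall la \near 0^'+, forall i : 'I_(n k.+1),
      `|(Fs la k.+1 - Fh k.+1) i 0| <= eps / (n k.+1)%:R * r k.+1 la.
    exact: filter_forall.
  near=> la.
  have Hall : forall i : 'I_(n k.+1),
      `|(Fs la k.+1 - Fh k.+1) i 0| <= eps / (n k.+1)%:R * r k.+1 la.
    by near: la.
  apply: le_trans (@enorm_bound _ _ _ _ Hall) _.
  by rewrite mulrA mulrCA divff ?mulr1 // gt_eqF.
have main : forall l, (1 <= l <= L)%N -> forall eps : R, 0 < eps ->
    \forall la \near 0^'+, enorm (Fs la l - Fh l) <= eps * r l la.
  elim=> [//|k IH] /andP[_ kL].
  case: k IH kL => [|k] IH kL.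
  - apply: (step 0%N kL (fun _ => 0)).
    + move=> eta _; apply: nearW => la.
      by rewrite /Fs /Fh /= subrr mulr0 /enorm big1 ?sqrtr0 // => i _; rewrite mxE expr0n.
    + exact: nearW.
    + exact: cvg_cst.
    + move=> e _; apply/cvgr0Pnorm_lt => e' e'0; apply: nearW => la.
      by rewrite mul0r normr0.
  - have kr' : (1 <= k.+1 <= L)%N by apply/andP; split => //; exact: ltnW.
    have kr2 : (2 <= k.+2 <= L)%N by apply/andP; split.
    have [_ [_ [Hr0 Hrc]]] := Hconv _ kr'.
    apply: (step k.+1 kL (r k.+1)).
    + exact: IH.
    + near=> la.
      have la0 : 0 < la by near: la; exact: nbhs_right_gt.
      exact/Hr0/ltW.
    + exact: Hrc.
    + exact: Hratio _ kr2.
move=> l hl.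
apply/cvgr0Pnorm_lt => e e0.
have Hm := main l hl (e / 2) (divr_gt0 e0 (ltr0Sn _ _)).
have Hp := Hrpos l hl.
near=> la.
have h1 : enorm (Fs la l - Fh l) <= e / 2 * r l la by near: la; exact: Hm.
have h2 : 0 < r l la by near: la; exact: Hp.
have h3 : 0 <= enorm (Fs la l - Fh l) by exact: sqrtr_ge0.
rewrite ger0_norm; last exact: divr_ge0 h3 (ltW h2).
have : enorm (Fs la l - Fh l) / r l la <= e / 2 by rewrite ler_pdivrMr.
rewrite /Fs /Fh; lra.
Unshelve. all: by end_near.
Qed.
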